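(* For every $p\ge2$ (i.e. $m=2^p>2$), the Sylvester matrix $H(2^p)$ has nonzero permanent. Consequently, when $n=m=2^p>2$ identical bosons are injected one per mode into the Sylvester interferometer $\frac{1}{\sqrt m}H(m)$, the output state with one boson in each mode is not suppressed.
   Context: For $m=2^p$, the Sylvester matrix $H(m)$ is defined recursively by $H(1)=[1]$ and $H(2^p)=\begin{bmatrix}H(2^{p-1})&H(2^{p-1})\\ H(2^{p-1})&-H(2^{p-1})\end{bmatrix}$. $\mathrm{perm}\,A=\sum_{\sigma\in S_m}\prod_{i=1}^m a_{i,\sigma(i)}$. For input $\vec s$ and output $\vec t$ (nondecreasing tuples of mode indices), the scattering matrix is $S_{i,j}=U_{t_i,s_j}$ and the bosonic amplitude is $\mathrm{perm}\,S/\sqrt{\prod_k\mu_k(\vec s)!\prod_k\mu_k(\vec t)!}$ with $\mu_k(\vec t)=|\{i:t_i=k\}|$; an output is suppressed if its amplitude is zero. *)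

(* Defs.v *)
From HB Require Import structures.
From mathcomp Require Import all_boot all_order all_algebra all_fingroup all_field.
Set Implicit Arguments. Unset Strict Implicit. Unset Printing Implicit Defensive.
Import Order.TTheory GRing.Theory Num.Theory.
Local Open Scope ring_scope.

Lemma sylvester_dim (p : nat) : (2 ^ p + 2 ^ p = 2 ^ p.+1)%N.
Proof. by rewrite expnS mul2n addnn. Qed.

Fixpoint sylvester (R : pzRingType) (p : nat) : 'M[R]_(2 ^ p) :=
  match p return 'M[R]_(2 ^ p) with
  | 0 => 1%:M
  | p'.+1 =>
      let H := sylvester R p' in
      castmx (sylvester_dim p', sylvester_dim p') (block_mx H H H (- H))
  end.

Definition permanent (R : pzRingType) (m : nat) (A : 'M[R]_m) : R :=
  \sum_(s : 'S_m) \prod_(i < m) A i (s i).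

Definition occupation (m n : nat) (t : n.-tuple 'I_m) (k : 'I_m) : nat :=
  count_mem k t.

Definition scattering (m n : nat) (U : 'M[algC]_m) (s t : n.-tuple 'I_m)
  : 'M[algC]_n := \matrix_(i < n, j < n) U (tnth t i) (tnth s j).

Definition bosonic_amplitude (m n : nat) (U : 'M[algC]_m) (s t : n.-tuple 'I_m)
  : algC :=
  permanent (scattering U s t) /
  sqrtC ((\prod_(k < m) ((occupation s k)`!)%:R) *
         (\prod_(k < m) ((occupation t k)`!)%:R)).

Definition suppressed (m n : nat) (U : 'M[algC]_m) (s t : n.-tuple 'I_m) : bool :=
  bosonic_amplitude U s t == 0.

Definition sylvester_interferometer (p : nat) : 'M[algC]_(2 ^ p) :=
  (sqrtC (2 ^ p)%:R)^-1 *: sylvester algC p.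

(* Main.v *)
Require Import Defs.
From HB Require Import structures.
From mathcomp Require Import all_boot all_order all_algebra all_fingroup all_field.
From mathcomp Require Import ring lra zify.
Set Implicit Arguments. Unset Strict Implicit. Unset Printing Implicit Defensive.
Import Order.TTheory GRing.Theory Num.Theory.
Local Open Scope ring_scope.

Notation H p := (sylvester int p).


Definition top p (i : 'I_(2 ^ p)) : 'I_(2 ^ p.+1) :=
  cast_ord (sylvester_dim p) (lshift (2 ^ p) i).
Definition bot p (i : 'I_(2 ^ p)) : 'I_(2 ^ p.+1) :=
  cast_ord (sylvester_dim p) (rshift (2 ^ p) i).
Definition lo p (x : 'I_(2 ^ p.+1)) : 'I_(2 ^ p) :=
  match split (cast_ord (esym (sylvester_dim p)) x) with inl y => y | inr y => y end.
Definition hi p (x : 'I_(2 ^ p.+1)) : bool :=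
  match split (cast_ord (esym (sylvester_dim p)) x) with inl _ => false | inr _ => true end.

Lemma loK p (x : 'I_(2 ^ p.+1)) : x = if hi x then bot (lo x) else top (lo x).
Proof.
rewrite /hi /lo /top /bot.
set y := cast_ord _ x.
have -> : x = cast_ord (sylvester_dim p) y by rewrite /y cast_ordKV.
have := splitK y; case: (split y) => a /= <-; by [] .
Qed.

Lemma lo_top p i : lo (@top p i) = i.
Proof. by rewrite /lo /top cast_ordK (unsplitK (inl _ i)). Qed.
Lemma hi_top p i : hi (@top p i) = false.
Proof. by rewrite /hi /top cast_ordK (unsplitK (inl _ i)). Qed.
Lemma lo_bot p i : lo (@bot p i) = i.
Proof. by rewrite /lo /bot cast_ordK (unsplitK (inr _ i)). Qed.
Lemma hi_bot p i : hi (@bot p i) = true.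
Proof. by rewrite /hi /bot cast_ordK (unsplitK (inr _ i)). Qed.

Definition sgn (b : bool) : int := if b then -1 else 1.

Lemma H_top p i x : H p.+1 (top i) x = H p i (lo x).
Proof.
rewrite [in LHS](loK x) /=; case: (hi x);
by rewrite castmxE /top /bot !cast_ordK ?block_mxEul ?block_mxEur.
Qed.

Lemma H_bot p i x : H p.+1 (bot i) x = sgn (hi x) * H p i (lo x).
Proof.
rewrite [in LHS](loK x) /=; case: (hi x);
by rewrite castmxE /top /bot !cast_ordK ?block_mxEdl ?block_mxEdr /sgn ?mulN1r ?mul1r ?mxE.
Qed.

Lemma H_pm p i j : H p i j = 1 \/ H p i j = -1.
Proof.
elim: p i j => [|p IH] i j.
  by rewrite /= mxE; left; rewrite (ord1 i) (ord1 j).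
rewrite [i]loK; case: (hi i); rewrite ?H_bot ?H_top; last exact: IH.
case: (IH (lo i) (lo j)) => ->; case: (hi j); rewrite /sgn ?mulN1r ?mul1r ?opprK; by [left|right].
Qed.

Lemma big_split_hi (R : Type) (idx : R) (op : Monoid.com_law idx) p (F : 'I_(2 ^ p.+1) -> R) :
  \big[op/idx]_(x : 'I_(2 ^ p.+1)) F x =
  op (\big[op/idx]_(i : 'I_(2 ^ p)) F (top i)) (\big[op/idx]_(i : 'I_(2 ^ p)) F (bot i)).
Proof.
rewrite (reindex (cast_ord (sylvester_dim p))); last first.
  by exists (cast_ord (esym (sylvester_dim p))) => x _; rewrite ?cast_ordK ?cast_ordKV.
by rewrite big_split_ord.
Qed.


Definition img p (J : finType) (s : {ffun 'I_(2 ^ p) -> J}) : {set J} :=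
  [set s i | i : 'I_(2 ^ p)].

Definition Qp p (J : finType) (w : J -> 'I_(2 ^ p)) (S : {set J}) : int :=
  \sum_(s : {ffun 'I_(2 ^ p) -> J} | injectiveb s && (img s == S))
     \prod_(i : 'I_(2 ^ p)) H p i (w (s i)).

Definition glue p (J : finType) (a b : {ffun 'I_(2 ^ p) -> J}) : {ffun 'I_(2 ^ p.+1) -> J} :=
  [ffun x => if hi x then b (lo x) else a (lo x)].

Lemma glue_top p (J : finType) (a b : {ffun 'I_(2 ^ p) -> J}) i : glue a b (top i) = a i.
Proof. by rewrite ffunE hi_top lo_top. Qed.
Lemma glue_bot p (J : finType) (a b : {ffun 'I_(2 ^ p) -> J}) i : glue a b (bot i) = b i.
Proof. by rewrite ffunE hi_bot lo_bot. Qed.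

Lemma top_inj p : injective (@top p).
Proof. by move=> i j /(congr1 (@lo p)); rewrite !lo_top. Qed.
Lemma bot_inj p : injective (@bot p).
Proof. by move=> i j /(congr1 (@lo p)); rewrite !lo_bot. Qed.
Lemma top_bot p i j : @top p i <> bot j.
Proof. by move=> /(congr1 (@hi p)); rewrite hi_top hi_bot. Qed.

Lemma in_img p (J : finType) (s : {ffun 'I_(2 ^ p) -> J}) y : (y \in img s) = [exists i, s i == y].
Proof.
apply/imsetP/existsP => [[i _ ->]|[i /eqP <-]]; first by exists i.
by exists i.
Qed.

Lemma glueP p (J : finType) (a b : {ffun 'I_(2 ^ p) -> J}) (S : {set J}) :
  injectiveb (glue a b) && (img (glue a b) == S) =
  (injectiveb a && (img a \subset S)) && (injectiveb b && (img b == S :\: img a)).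
Proof.
apply/idP/idP.
  case/andP => /injectiveP ig /eqP iS.
  have ia : injective a.
    by move=> i j e; apply: top_inj; apply: ig; rewrite !glue_top.
  have ib : injective b.
    by move=> i j e; apply: bot_inj; apply: ig; rewrite !glue_bot.
  have aS : img a \subset S.
    apply/subsetP => y; rewrite in_img => /existsP [i /eqP <-].
    by rewrite -iS in_img; apply/existsP; exists (top i); rewrite glue_top.
  rewrite aS andbT; apply/andP; split; first by apply/injectiveP.
  apply/andP; split; first by apply/injectiveP.
  rewrite eqEsubset; apply/andP; split; apply/subsetP => y.
    rewrite in_img => /existsP [i /eqP <-]; rewrite in_setD; apply/andP; split.
      apply/negP; rewrite in_img => /existsP [j /eqP].
      move=> e; have := ig (bot i) (top j); rewrite glue_top glue_bot.
      by move=> /(_ (esym e)) /esym /top_bot.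
    by rewrite -iS in_img; apply/existsP; exists (bot i); rewrite glue_bot.
  rewrite in_setD -iS => /andP [na]; rewrite in_img => /existsP [x /eqP ey]; subst y.
  move: na; rewrite (loK x); case: (hi x); rewrite ?glue_top ?glue_bot.
    by move=> _; rewrite in_img; apply/existsP; exists (lo x).
  by move/negP; case; rewrite in_img; apply/existsP; exists (lo x).
case/andP => /andP [/injectiveP ia aS] /andP [/injectiveP ib /eqP bS].
have bdis i j : b i <> a j.
  move=> e; have : b i \in img b by rewrite in_img; apply/existsP; exists i.
  by rewrite bS in_setD e in_img => /andP [/existsP []]; exists j.
apply/andP; split.
  apply/injectiveP => x y; rewrite [x]loK [y]loK.
  case: (hi x); case: (hi y); rewrite ?glue_top ?glue_bot.
  - by move/ib ->.
  - by move/bdis.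
  - by move/esym/bdis.
  by move/ia ->.
rewrite eqEsubset; apply/andP; split; apply/subsetP => y.
  rewrite in_img => /existsP [x /eqP <-]; rewrite [x]loK; case: (hi x);
    rewrite ?glue_top ?glue_bot.
    have : b (lo x) \in img b by rewrite in_img; apply/existsP; exists (lo x).
    by rewrite bS in_setD => /andP [].
  apply: (subsetP aS); by rewrite in_img; apply/existsP; exists (lo x).
move=> yS; case ya : (y \in img a).
  move: ya; rewrite !in_img => /existsP [i /eqP <-].
  by apply/existsP; exists (top i); rewrite glue_top.
have : y \in img b by rewrite bS in_setD ya yS.
rewrite !in_img => /existsP [i /eqP <-].
by apply/existsP; exists (bot i); rewrite glue_bot.
Qed.

Definition sg p (J : finType) (w : J -> 'I_(2 ^ p.+1)) (X : {set J}) : int :=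
  \prod_(j in X) sgn (hi (w j)).

Lemma prod_glue p (J : finType) (w : J -> 'I_(2 ^ p.+1)) (a b : {ffun 'I_(2 ^ p) -> J}) :
  injective b ->
  \prod_(x : 'I_(2 ^ p.+1)) H p.+1 x (w (glue a b x)) =
  (\prod_(i : 'I_(2 ^ p)) H p i (lo (w (a i)))) *
  (sg w (img b) * \prod_(i : 'I_(2 ^ p)) H p i (lo (w (b i)))).
Proof.
move=> ib; rewrite big_split_hi; congr (_ * _).
  by apply: eq_bigr => i _; rewrite glue_top H_top.
rewrite /sg /img big_imset /=; last by move=> i j _ _; apply: ib.
rewrite -big_split /=; apply: eq_bigr => i _; by rewrite glue_bot H_bot.
Qed.

Lemma Qp_rec p (J : finType) (w : J -> 'I_(2 ^ p.+1)) (S : {set J}) :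
  Qp w S = \sum_(S1 : {set J} | S1 \subset S)
     sg w (S :\: S1) * Qp (fun j => lo (w j)) S1 * Qp (fun j => lo (w j)) (S :\: S1).
Proof.
rewrite /Qp.
rewrite (reindex (fun ab : {ffun 'I_(2 ^ p) -> J} * {ffun 'I_(2 ^ p) -> J} =>
                    glue ab.1 ab.2)) /=; last first.
  exists (fun s : {ffun 'I_(2 ^ p.+1) -> J} =>
            ([ffun i => s (top i)], [ffun i => s (bot i)])) => [[a b] _ | s _] /=.
    by congr pair; apply/ffunP => i; rewrite ffunE ?glue_top ?glue_bot.
  apply/ffunP => x; rewrite ffunE [in RHS](loK x); case: (hi x); by rewrite ffunE.
under eq_bigl => ab do rewrite glueP.
rewrite -(pair_big_dep (fun a : {ffun 'I_(2 ^ p) -> J} => injectiveb a && (img a \subset S))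
          (fun a b : {ffun 'I_(2 ^ p) -> J} => injectiveb b && (img b == S :\: img a))
          (fun a b : {ffun 'I_(2 ^ p) -> J} => \prod_(x : 'I_(2 ^ p.+1)) H p.+1 x (w (glue a b x)))).
rewrite (partition_big (fun a : {ffun 'I_(2 ^ p) -> J} => img a) (fun S1 => S1 \subset S)); last first.
  by move=> a /andP [].
apply: eq_bigr => S1 sS1.
rewrite -mulrA big_distrl big_distrr.
apply: eq_big => [a | a /andP [ia /eqP ea]].
  by case: (img a =P S1) => [->|_]; rewrite ?sS1 ?andbF ?andbT.
rewrite [RHS]/= mulrCA big_distrr [RHS]/= big_distrr [RHS]/=.
apply: eq_big => [b | b /andP [/injectiveP ib /eqP eb]]; first by rewrite ea.
rewrite prod_glue // eb ea.
by rewrite mulrCA.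
Qed.


Lemma pow2_gt0 p : (0 < 2 ^ p)%N. Proof. by rewrite expn_gt0. Qed.
Definition o0 p : 'I_(2 ^ p) := Ordinal (pow2_gt0 p).

Definition pm1 (x : int) := (x == 1) || (x == -1).

Lemma pm1M x y : pm1 x -> pm1 y -> pm1 (x * y).
Proof. by case/orP => /eqP ->; case/orP => /eqP ->; rewrite /pm1 ?mul1r ?mulN1r ?opprK eqxx ?orbT. Qed.

Lemma pm1_prod (I : finType) (P : pred I) (F : I -> int) :
  (forall i, P i -> pm1 (F i)) -> pm1 (\prod_(i | P i) F i).
Proof. move=> h; apply: (big_ind pm1); [by rewrite /pm1 eqxx | exact: pm1M | exact: h]. Qed.

Lemma pm1_sqr x : pm1 x -> x * x = 1.
Proof. by case/orP => /eqP ->; rewrite ?mulN1r ?opprK ?mul1r. Qed.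

Lemma pm1_eq x y z : pm1 x -> x * y = x * z -> y = z.
Proof. by move=> px e; rewrite -[y]mul1r -(pm1_sqr px) -mulrA e mulrA pm1_sqr ?mul1r. Qed.

Lemma pm1H p i j : pm1 (H p i j).
Proof. by case: (H_pm i j) => ->; rewrite /pm1 eqxx ?orbT. Qed.

Lemma pm1_sgn b : pm1 (sgn b).
Proof. by case: b; rewrite /pm1 /sgn eqxx ?orbT. Qed.

Definition chi p (J : finType) (w : J -> 'I_(2 ^ p)) (X : {set J}) (c : 'I_(2 ^ p)) : int :=
  \prod_(j in X) H p c (w j).

Definition Zp p (J : finType) (w : J -> 'I_(2 ^ p)) (X : {set J}) : bool :=
  [forall c, chi w X c == 1].

Lemma pm1_chi p (J : finType) (w : J -> 'I_(2 ^ p)) (X : {set J}) (c : 'I_(2 ^ p)) : pm1 (@chi p J w X c).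
Proof. by apply: pm1_prod => j _; exact: pm1H. Qed.

Lemma pm1_sg p (J : finType) (w : J -> 'I_(2 ^ p.+1)) (X : {set J}) : pm1 (@sg p J w X).
Proof. by apply: pm1_prod => j _; exact: pm1_sgn. Qed.

Lemma prod_split (J : finType) (F : J -> int) (X X1 : {set J}) : X1 \subset X ->
  \prod_(j in X) F j = \prod_(j in X1) F j * \prod_(j in X :\: X1) F j.
Proof.
move=> sX; rewrite (big_setID X1) /=; congr (_ * _).
by apply: eq_bigl => j; rewrite in_setI andbC; case: (boolP (j \in X1)) => // /(subsetP sX) ->.
Qed.

Lemma chi_split p (J : finType) (w : J -> 'I_(2 ^ p)) (X X1 : {set J}) c : X1 \subset X ->
  @chi p J w X c = chi w X1 c * chi w (X :\: X1) c.
Proof. exact: prod_split. Qed.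

Lemma sg_split p (J : finType) (w : J -> 'I_(2 ^ p.+1)) (X X1 : {set J}) : X1 \subset X ->
  @sg p J w X = sg w X1 * sg w (X :\: X1).
Proof. exact: prod_split. Qed.

Lemma chi_top p (J : finType) (w : J -> 'I_(2 ^ p.+1)) X c :
  chi w X (top c) = chi (fun j => lo (w j)) X c.
Proof. by apply: eq_bigr => j _; rewrite H_top. Qed.

Lemma chi_bot p (J : finType) (w : J -> 'I_(2 ^ p.+1)) X c :
  chi w X (bot c) = sg w X * chi (fun j => lo (w j)) X c.
Proof. by rewrite /chi /sg -big_split; apply: eq_bigr => j _; rewrite H_bot. Qed.

Lemma Zrec p (J : finType) (w : J -> 'I_(2 ^ p.+1)) X :
  Zp w X = Zp (fun j => lo (w j)) X && (sg w X == 1).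
Proof.
apply/forallP/andP => [h | [/forallP h /eqP s1] x].
  have h' c : chi (fun j => lo (w j)) X c = 1.
    by have /eqP := h (top c); rewrite chi_top.
  split; first by apply/forallP => c; rewrite h'.
  by have /eqP := h (bot (o0 p)); rewrite chi_bot h' mulr1 => ->.
rewrite [x]loK; case: (hi x); rewrite ?chi_top ?chi_bot ?s1 ?mul1r; exact: h.
Qed.

Lemma chi_val p (J : finType) (w : J -> 'I_(2 ^ p)) (X : {set J}) (c : 'I_(2 ^ p)) : @chi p J w X c != 1 -> chi w X c = -1.
Proof. by case/orP: (pm1_chi w X c) => /eqP ->; rewrite ?eqxx. Qed.

Lemma Q0 p (J : finType) (w : J -> 'I_(2 ^ p)) (X : {set J}) :
  #|X| != (2 ^ p)%N -> Qp w X = 0.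
Proof.
move=> hX; rewrite /Qp big_pred0 // => s; apply/negP => /andP [/injectiveP ins /eqP ei].
by move: hX; rewrite -ei /img card_imset //  card_ord eqxx.
Qed.

Lemma ordp0 (i : 'I_(2 ^ 0)) : i = o0 0.
Proof. apply: val_inj => /=; case: i => m hm /=; by move: hm; rewrite expn0 ltnS leqn0 => /eqP. Qed.

Lemma H0 (i j : 'I_(2 ^ 0)) : H 0 i j = 1.
Proof. by rewrite (ordp0 i) (ordp0 j) /= mxE eqxx. Qed.

Lemma Qp_base (J : finType) (w : J -> 'I_(2 ^ 0)) (X : {set J}) :
  #|X| = 1%N -> Qp w X = 1.
Proof.
move=> /eqP /cards1P [j0 ->]; rewrite /Qp (big_pred1 [ffun=> j0]); last first.
  move=> s; apply/andP/eqP => [[_ /eqP e]|->].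
    apply/ffunP => i; rewrite ffunE; apply/set1P; rewrite -e.
    by apply/imsetP; exists i.
  split.
    by apply/injectiveP => i j _; rewrite (ordp0 i) (ordp0 j).
  apply/eqP/setP => y; rewrite in_set1; apply/imsetP/eqP => [[i _ ->]|->].
    by rewrite ffunE.
  by exists (o0 0); rewrite ?ffunE.
by apply: big1 => i _; rewrite H0.
Qed.

Lemma chi_sum p (J : finType) (w : J -> 'I_(2 ^ p)) (X : {set J}) :
  \sum_c chi w X c = if Zp w X then (2 ^ p)%:R else 0.
Proof.
elim: p w => [|p IH] w.
  have e c : chi w X c = 1 by apply: big1 => j _; rewrite H0.
  have -> : Zp w X by apply/forallP => c; rewrite e.
  rewrite (eq_bigr (fun _ => 1)) ?e // sumr_const card_ord.
  by [].
rewrite big_split_hi /=.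
under eq_bigr => c _ do rewrite chi_top.
under [X in _ + X]eq_bigr => c _ do rewrite chi_bot.
rewrite -big_distrr /= IH Zrec.
case: (Zp _ X); last by rewrite mulr0 addr0.
case/orP: (pm1_sg w X) => /eqP ->; rewrite ?eqxx ?mul1r.
  by rewrite expnS mulnC natrM mulr2n mulrDr mulr1.
have -> : (-1 == 1 :> int) = false by [].
by rewrite mulN1r subrr.
Qed.

Local Open Scope nat_scope.

Lemma fact2 m : exists2 o, odd o & (2 * m)`! = 2 ^ m * m`! * o.
Proof.
elim: m => [|m [o oo IH]]; first by exists 1%N.
exists (o * (2 * m).+1)%N; first by rewrite oddM oo /= mul2n odd_double.
have -> : (2 * m.+1 = (2 * m).+2)%N by lia.
rewrite !factS IH expnS.
ring.
Qed.

Lemma factpow p : exists2 o, odd o & (2 ^ p)`! = 2 ^ (2 ^ p).-1 * o.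
Proof.
elim: p => [|p [o oo IH]]; first by exists 1%N.
have [o2 oo2 e2] := fact2 (2 ^ p).
exists (o * o2)%N; first by rewrite oddM oo oo2.
rewrite expnS e2 IH.
have kp : (0 < 2 ^ p)%N by rewrite expn_gt0.
have -> : ((2 * 2 ^ p).-1 = 2 ^ p + (2 ^ p).-1)%N by lia.
rewrite expnD; ring.
Qed.

Lemma B2 p : exists2 c, odd c & 'C(2 * 2 ^ p, 2 ^ p) = (2 * c)%N.
Proof.
set k := (2 ^ p)%N.
have kp : (0 < k)%N by rewrite expn_gt0.
have hb := bin_fact (leq_addl k k).
rewrite addnK addnn -mul2n in hb.
have [o oo e] := fact2 k; have [o1 oo1 e1] := factpow p.
rewrite e -/k in hb.
have h1 : ('C(2 * k, k) * k`! = 2 ^ k * o)%N.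
  apply/eqP; rewrite -(eqn_pmul2r (fact_gt0 k)); apply/eqP.
  by rewrite -mulnA hb mulnAC.
rewrite e1 -/k in h1.
have h2 : ('C(2 * k, k) * o1 = 2 * o)%N.
  apply/eqP; rewrite -(eqn_pmul2r (expn_gt0 2 k.-1)) /=; apply/eqP.
  transitivity (2 ^ k * o)%N; first by rewrite -h1; ring.
  have -> : (2 ^ k = 2 * 2 ^ k.-1)%N by rewrite -expnS prednK.
  ring.
have ev : ~~ odd 'C(2 * k, k).
  apply/negP => oc; have := congr1 odd h2.
  by rewrite oddM oc oo1 mul2n odd_double.
have eC : 'C(2 * k, k) = (2 * ('C(2 * k, k))./2)%N.
  by rewrite -[LHS]odd_double_half (negbTE ev) add0n -mul2n.
exists ('C(2 * k, k))./2; last exact: eC.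
have h3 : (('C(2 * k, k))./2 * o1 = o)%N.
  by move: h2; rewrite {1}eC -mulnA => /eqP; rewrite eqn_mul2l /= => /eqP.
by move: oo; rewrite -h3 oddM => /andP [].
Qed.

Lemma binR m : (m.+1 * 'C(2 * m.+1, m.+1) = 2 * (2 * m).+1 * 'C(2 * m, m))%N.
Proof.
have h1 := mul_bin_diag (2 * m.+1) m.
have h2 := mul_bin_diag (2 * m).+1 m.
have h3 : 'C((2 * m).+1, m.+1) = 'C((2 * m).+1, m).
  have le : (m <= (2 * m).+1)%N by lia.
  have := bin_sub le; have -> : ((2 * m).+1 - m = m.+1)%N by lia.
  by [].
have e1 : (2 * m.+1).-1 = (2 * m).+1 by lia.
rewrite e1 in h1; rewrite /= h3 in h2.
by rewrite -h1 -mulnA -h2 mulnA.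
Qed.

Lemma B1 p j : (j < 2 ^ p)%N ->
  (2 ^ (p - j) %| 'C(2 * ((2 ^ p).-1 - j), (2 ^ p).-1 - j))%N.
Proof.
set k := (2 ^ p)%N.
have kp : (0 < k)%N by rewrite expn_gt0.
have cop e n : odd n -> coprime (2 ^ e) n.
  by move=> on; apply: coprimeXl; rewrite coprime2n.
elim: j => [_|j IH jk].
  rewrite subn0 subn0.
  have [c oc ec] := B2 p.
  have := binR k.-1; rewrite prednK // -/k ec.
  move=> h.
  have : (2 ^ p %| (2 * k.-1).+1 * 'C(2 * k.-1, k.-1))%N.
    apply/dvdnP; exists c; apply/eqP; rewrite -(eqn_pmul2l (isT : (0 < 2)%N)).
    by rewrite mulnA -h /k; apply/eqP; ring.
  by rewrite Gauss_dvdr // cop // /= mul2n odd_double.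
have IH' := IH (ltnW jk).
set m := (k.-1 - j.+1)%N.
have em : (k.-1 - j = m.+1)%N by rewrite /m; lia.
rewrite em in IH'.
have h := binR m.
case e : (p - j)%N => [|e'].
  by rewrite (_ : p - j.+1 = 0)%N ?expn0 ?dvd1n //; lia.
rewrite (_ : p - j.+1 = e')%N; last by lia.
rewrite e expnS in IH'.
have : (2 * 2 ^ e' %| 2 * ((2 * m).+1 * 'C(2 * m, m)))%N.
  by rewrite mulnA -h; apply: dvdn_mull.
rewrite dvdn_pmul2l // Gauss_dvdr //; apply: cop.
by rewrite /= mul2n odd_double.
Qed.

Local Open Scope ring_scope.

Lemma coef_Xadd1 n m : ((('X + 1 : {poly int}) ^+ n)`_m) = ('C(n, m))%:R.
Proof.
rewrite exprD1n coef_sum.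
under eq_bigr => i _ do rewrite coefMn coefXn.
case: (ltnP m n.+1) => hm.
  rewrite (bigD1 (Ordinal hm)) //= eqxx big1 ?addr0 //.
  by move=> i /negbTE; rewrite -(inj_eq val_inj) /= eq_sym => ->; rewrite mul0rn.
rewrite bin_small // big1 // => i _.
have : (i < m)%N by apply: leq_trans (ltn_ord i) hm.
by rewrite ltn_neqAle eq_sym => /andP [/negbTE -> _]; rewrite mul0rn.
Qed.

Definition Pm (m b : nat) : int :=
  ((('X + 1 : {poly int}) ^+ (2 * (m - b)) * (1 - 'X) ^+ (2 * b))`_m).

Lemma Pm0 m : Pm m 0 = ('C(2 * m, m))%:R.
Proof. by rewrite /Pm subn0 muln0 expr0 mulr1 coef_Xadd1. Qed.

Lemma Pm_step m b : (b < m)%N -> Pm m b.+1 = Pm m b - 4 * Pm m.-1 b.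
Proof.
case: m => [//|m] hb.
rewrite /Pm /=.
have e1 : (2 * (m.+1 - b.+1) = 2 * (m - b))%N by lia.
have e2 : (2 * (m.+1 - b) = (2 * (m - b)) + 2)%N by lia.
rewrite e1 e2 exprD (_ : 2 * b.+1 = 2 * b + 2)%N; last by lia.
rewrite exprD.
set A := ('X + 1 : {poly int}) ^+ (2 * (m - b)).
set B := (1 - 'X : {poly int}) ^+ (2 * b).
have -> : A * (B * (1 - 'X) ^+ 2) = A * ('X + 1) ^+ 2 * B - 'X * ((A * B) *+ 4).
  by rewrite mulrnAr; ring.
rewrite coefB coefXM /= coefMn mulrAC.
by rewrite mulr_natl.
Qed.

Lemma dvdz_natE (d n : nat) : ((d%:R : int) %| n%:R)%Z = (d %| n)%N.
Proof. by rewrite dvdzE !natz !absz_nat. Qed.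

Lemma F1 p m b : (m < 2 ^ p)%N -> (b <= m)%N ->
  ((2 ^+ (p - ((2 ^ p).-1 - m)) : int) %| Pm m b)%Z.
Proof.
have lp : (p < 2 ^ p)%N by rewrite ltn_expl.
elim: m b => [|m IH] b hm hb.
  move: hb; rewrite leqn0 => /eqP ->.
  rewrite Pm0 (_ : p - _ = 0)%N ?expr0; last by lia.
  by rewrite dvdzE dvd1n.
elim: b hb => [_|b IHb hb].
  rewrite Pm0 -natrX dvdz_natE.
  have := B1 (j := ((2 ^ p).-1 - m.+1)%N) (_ : _ < 2 ^ p)%N.
  have -> : ((2 ^ p).-1 - ((2 ^ p).-1 - m.+1) = m.+1)%N by lia.
  by apply; lia.
rewrite Pm_step // /=.
apply: rpredB; first by apply: IHb; lia.
have h := IH b (ltnW hm) (_ : b <= m)%N.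
have : ((2 ^+ 2 * 2 ^+ (p - ((2 ^ p).-1 - m)) : int) %| 4 * Pm m b)%Z.
  by apply: dvdz_mul => //; apply: h; lia.
apply: dvdz_trans; rewrite -exprD; apply: dvdz_exp2l; lia.
Qed.

Lemma F2 p b : (b <= 2 ^ p)%N ->
  ((2 ^+ p.+2 : int) %| Pm (2 ^ p) b - ('C(2 * 2 ^ p, 2 ^ p))%:R)%Z.
Proof.
have kp : (0 < 2 ^ p)%N by rewrite expn_gt0.
elim: b => [_|b IH hb]; first by rewrite Pm0 subrr dvdz0.
rewrite Pm_step // addrAC.
apply: rpredB; first by apply: IH; lia.
have h := F1 (m := (2 ^ p).-1) (b := b) (_ : _ < 2 ^ p)%N (_ : b <= _)%N.
have e : (p - ((2 ^ p).-1 - (2 ^ p).-1) = p)%N by rewrite subnn subn0.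
rewrite e in h.
rewrite exprS exprS mulrA; apply: dvdz_mul => //; apply: h; lia.
Qed.

Local Open Scope ring_scope.

Lemma subset_sum_coef (J : finType) (X : {set J}) (e : J -> int) m :
  \sum_(Y : {set J} | (Y \subset X) && (#|Y| == m)) \prod_(j in Y) e j =
  (\prod_(j in X) ((e j)%:P * 'X + 1))`_m.
Proof.
rewrite [in RHS]big_mkcond /=.
have -> : \prod_j (if j \in X then (e j)%:P * 'X + 1 else 1) =
          \prod_j ((if j \in X then (e j)%:P * 'X else 0) + 1 : {poly int}).
  by apply: eq_bigr => j _; case: (j \in X); rewrite ?add0r.
rewrite bigA_distr coef_sum [in LHS]big_mkcond /=.
apply: eq_bigr => Y _.
case sub: (Y \subset X).
  rewrite (eq_bigr (fun j => if j \in Y then (e j)%:P * 'X else 1)); last first.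
    by move=> j _; case: ifP => // jY; rewrite (subsetP sub j jY).
  rewrite -big_mkcond /= big_split /= -rmorph_prod prodr_const coefCM coefXn /=.
  have -> : (m == #|Y|) = (#|Y| == m) by rewrite eq_sym.
  by case: (#|Y| == m); rewrite ?mulr1 ?mulr0.
move/negbT: sub => /subsetPn [j jY jX].
by rewrite [\prod_i _](bigD1 j) //= jY (negbTE jX) mul0r coef0.
Qed.

Lemma prod_splitR (R : comRingType) (J : finType) (F : J -> R) (X X1 : {set J}) : X1 \subset X ->
  \prod_(j in X) F j = \prod_(j in X1) F j * \prod_(j in X :\: X1) F j.
Proof.
move=> sX; rewrite (big_setID X1) /=; congr (_ * _).
by apply: eq_bigl => j; rewrite in_setI andbC; case: (boolP (j \in X1)) => // /(subsetP sX) ->.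
Qed.

Lemma prod_pm (J : finType) (X : {set J}) (e : J -> int) :
  (forall j, j \in X -> e j = 1 \/ e j = -1) ->
  let Xp := [set j in X | e j == 1] in
  \prod_(j in X) ((e j)%:P * 'X + 1) = ('X + 1) ^+ #|Xp| * (1 - 'X) ^+ #|X :\: Xp|
  /\ \prod_(j in X) e j = (-1) ^+ #|X :\: Xp|.
Proof.
move=> hpm Xp.
have sX : Xp \subset X by apply/subsetP => j; rewrite inE => /andP [].
have em j : j \in X :\: Xp -> e j = -1.
  rewrite !inE => /andP [/negP nj jX]; case: (hpm j jX) => // e1.
  by case: nj; rewrite jX e1 eqxx.
have ep j : j \in Xp -> e j = 1 by rewrite inE => /andP [_ /eqP].
split.
  rewrite (prod_splitR _ sX); congr (_ * _).
    by rewrite -prodr_const; apply: eq_bigr => j /ep ->; rewrite mul1r.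
  by rewrite -prodr_const; apply: eq_bigr => j /em ->; rewrite polyCN polyC1 mulN1r addrC.
rewrite (prod_splitR _ sX) (eq_bigr (fun _ => 1)); last by move=> j /ep.
rewrite big1_eq mul1r -prodr_const; apply: eq_bigr => j /em //.
Qed.

Lemma esym_sum p (J : finType) (X : {set J}) (e : J -> int) :
  (forall j, j \in X -> e j = 1 \/ e j = -1) -> #|X| = (2 * 2 ^ p)%N ->
  \prod_(j in X) e j = 1 ->
  ((2 ^+ p.+2 : int) %| \sum_(Y : {set J} | (Y \subset X) && (#|Y| == 2 ^ p)%N)
        \prod_(j in Y) e j - ('C(2 * 2 ^ p, 2 ^ p))%:R)%Z.
Proof.
move=> hpm cX p1.
have [e1 e2] := prod_pm hpm.
set Xp := [set j in X | e j == 1] in e1 e2.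
set a := #|X :\: Xp| in e1 e2.
have sX : Xp \subset X by apply/subsetP => j; rewrite inE => /andP [].
have ca : (#|Xp| + a = #|X|)%N.
  by rewrite /a -(cardsID Xp X) (setIidPr sX).
have ev : ~~ odd a.
  apply/negP => oa; move: p1; rewrite e2 -signr_odd oa expr1 => /eqP.
  by [].
have ea : a = (2 * a./2)%N by rewrite -[LHS]odd_double_half (negbTE ev) add0n mul2n.
set b := a./2 in ea.
rewrite subset_sum_coef e1.
have -> : #|Xp| = (2 * (2 ^ p - b))%N by lia.
rewrite ea.
have := F2 (p := p) (b := b); rewrite /Pm; apply; lia.
Qed.


Lemma setDDK (J : finType) (S Y : {set J}) : Y \subset S -> S :\: (S :\: Y) = Y.
Proof.
move=> sY; apply/setP => j; rewrite !inE.
case jY: (j \in Y); case jS: (j \in S) => //=.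
by rewrite (subsetP sY j jY) in jS.
Qed.

Lemma compl_sum (J : finType) (S : {set J}) (F : {set J} -> int) :
  \sum_(Y : {set J} | Y \subset S) F Y = \sum_(Y : {set J} | Y \subset S) F (S :\: Y).
Proof.
rewrite (reindex_onto (fun Y : {set J} => S :\: Y) (fun Y : {set J} => S :\: Y)); last by move=> Y; exact: setDDK.
apply: eq_bigl => Y; rewrite subsetDl /=.
by apply/eqP/idP => [<-|/setDDK //]; rewrite subsetDl.
Qed.

Lemma pair_compl (J : finType) (S : {set J}) (j0 : J) (F : {set J} -> int) :
  j0 \in S -> (forall Y : {set J}, Y \subset S -> F (S :\: Y) = F Y) ->
  \sum_(Y : {set J} | Y \subset S) F Y = (\sum_(Y : {set J} | (Y \subset S) && (j0 \in Y)) F Y) *+ 2.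
Proof.
move=> j0S hF; rewrite (bigID (fun Y : {set J} => j0 \in Y)) /= mulr2n; congr (_ + _).
rewrite (reindex_onto (fun Y : {set J} => S :\: Y) (fun Y : {set J} => S :\: Y)); last first.
  by move=> Y /andP [sY _]; exact: setDDK.
apply: eq_big => Y.
  rewrite subsetDl /= !inE j0S andbT negbK.
  case jY: (j0 \in Y); rewrite ?andbF ?andbT //=.
  by apply/eqP/idP => [<-|sY]; [exact: subsetDl | exact: setDDK].
by case/andP => _ /eqP e; rewrite hF // -e subsetDl.
Qed.

Lemma cardsD_sub (J : finType) (S Y : {set J}) : Y \subset S -> #|S :\: Y| = (#|S| - #|Y|)%N.
Proof. by move=> sY; rewrite cardsD (setIidPr sY). Qed.

Lemma Zp_compl p (J : finType) (u : J -> 'I_(2 ^ p)) (S Y : {set J}) :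
  Y \subset S -> Zp u S -> Zp u (S :\: Y) = Zp u Y.
Proof.
move=> sY /forallP zS; apply/forallP/forallP => h c; have := zS c;
  rewrite (chi_split _ _ sY) => /eqP e; apply/eqP.
  have /eqP h1 := h c; rewrite h1 mulr1 in e; exact: e.
have /eqP h1 := h c; rewrite h1 mul1r in e; exact: e.
Qed.

Lemma count_odd p (J : finType) (u : J -> 'I_(2 ^ p)) (S : {set J}) (j0 : J) :
  #|S| = (2 * 2 ^ p)%N -> Zp u S -> j0 \in S ->
  exists r : int, \sum_(Y : {set J} | (Y \subset S) && (j0 \in Y))
      (if (#|Y| == 2 ^ p)%N && Zp u Y then 1 else 0 : int) = 2 * r + 1.
Proof.
move=> cS zS j0S.
set G := fun Y : {set J} => (if (#|Y| == 2 ^ p)%N && Zp u Y then 1 else 0 : int).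
have sym (Y : {set J}) : Y \subset S -> G (S :\: Y) = G Y.
  move=> sY; rewrite /G Zp_compl // cardsD_sub //.
  have := subset_leq_card sY; rewrite cS => le.
  by congr (if _ then _ else _); congr (_ && _); apply/eqP/eqP; lia.
have hN := pair_compl j0S sym.
set M := \sum_(Y : {set J} | (Y \subset S) && (j0 \in Y)) G Y in hN.
set N := \sum_(Y : {set J} | Y \subset S) G Y in hN.
have hd : ((2 ^+ p.+2 : int) %| (2 ^+ p) * (N - ('C(2 * 2 ^ p, 2 ^ p))%:R))%Z.
  have e1 : (2 ^+ p) * N = \sum_c \sum_(Y : {set J} | (Y \subset S) && (#|Y| == 2 ^ p)%N)
                                \prod_(j in Y) H p c (u j).
    rewrite exchange_big /= /N (bigID (fun Y : {set J} => (#|Y| == 2 ^ p)%N)) /=.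
    rewrite [X in _ + X]big1 ?addr0; last by move=> Y /andP [_ /negbTE]; rewrite /G => ->.
    rewrite mulr_sumr; apply: eq_bigr => Y /andP [_ /eqP cY].
    rewrite chi_sum /G cY eqxx /=; case: (Zp u Y); by rewrite ?mulr1 ?mulr0 ?natrX.
  rewrite mulrBr e1.
  have -> : (2 ^+ p : int) * ('C(2 * 2 ^ p, 2 ^ p))%:R =
            \sum_(c : 'I_(2 ^ p)) (('C(2 * 2 ^ p, 2 ^ p))%:R : int).
    rewrite sumr_const card_ord -[RHS]mulr_natl; congr (_ * _); by rewrite natrX.
  rewrite -sumrB; apply: rpred_sum => c _.
  apply: esym_sum => //.
  - by move=> j _; exact: H_pm.
  - by move/forallP: zS => /(_ c) /eqP.
have hd2 : ((4 : int) %| N - ('C(2 * 2 ^ p, 2 ^ p))%:R)%Z.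
  move: hd; rewrite exprSr exprSr -mulrA (_ : 2 * 2 = 4) // dvdz_mul2l //.
  by rewrite expf_neq0.
have [c oc ec] := B2 p.
have hd3 : ((2 : int) %| M - c%:R)%Z.
  have e : N - ('C(2 * 2 ^ p, 2 ^ p))%:R = 2 * (M - c%:R).
    by rewrite hN ec natrM mulr2n; ring.
  by move: hd2; rewrite e (_ : (4 : int) = 2 * 2) // dvdz_mul2l.
case/dvdzP: hd3 => q hq.
exists (q + (c./2)%:R); transitivity M; first by [].
rewrite -[M](subrK c%:R) hq.
have ec2 : (c = (2 * c./2).+1)%N by rewrite -{1}(odd_double_half c) oc mul2n add1n.
move: (c./2) ec2 => h ->.
lia.
Qed.

Lemma pm1_inv x y : pm1 x -> x * y = 1 -> y = x.
Proof. by move=> px e; apply: (pm1_eq px); rewrite e pm1_sqr. Qed.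

Lemma pm1_ninv x y : pm1 x -> x * y = -1 -> y = - x.
Proof. by move=> px e; apply: (pm1_eq px); rewrite e mulrN pm1_sqr. Qed.

Lemma sg_val p (J : finType) (w : J -> 'I_(2 ^ p.+1)) X : sg w X != 1 -> sg w X = -1.
Proof. by case/orP: (pm1_sg w X) => /eqP ->; rewrite ?eqxx. Qed.

Lemma mainA p : forall (J : finType) (w : J -> 'I_(2 ^ p)) (S : {set J}),
  #|S| = (2 ^ p)%N ->
  if Zp w S then exists t : int, Qp w S = 2 ^+ (2 ^ p).-1 * (2 * t + 1)
  else Qp w S = 0.
Proof.
elim: p => [|p IH] J w S cS.
  have z : Zp w S by apply/forallP => c; rewrite /chi big1 // => j _; rewrite H0.
  rewrite z; exists 0; rewrite Qp_base //.
set u := fun j => lo (w j).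
have IHu := IH J u.
have cSY (Y : {set J}) : Y \subset S -> #|Y| = (2 ^ p)%N -> #|S :\: Y| = (2 ^ p)%N.
  by move=> sY cY; rewrite cardsD_sub // cS cY expnS; lia.
rewrite Zrec Qp_rec -/u.
set F := fun Y : {set J} => sg w (S :\: Y) * Qp u Y * Qp u (S :\: Y).
case Zu : (Zp u S) => /=; last first.
  apply: big1 => Y sY; rewrite -/(F Y) /F.
  case cY : (#|Y| == 2 ^ p)%N; last by rewrite (Q0 u (negbT cY)) mulr0 mul0r.
  move/eqP: cY => cY; have cY' := cSY Y sY cY.
  have := IHu Y cY; case: ifP => zY; [move=> _ | by move->; rewrite mulr0 mul0r].
  have := IHu (S :\: Y) cY'; case: ifP => zY'; [move=> _ | by move->; rewrite mulr0].
  move: Zu; rewrite /Zp => /negbT /forallPn [c /eqP nc].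
  case: nc; rewrite (chi_split _ _ sY).
  by move/forallP: zY => /(_ c) /eqP ->; move/forallP: zY' => /(_ c) /eqP ->; rewrite mulr1.
case sgS : (sg w S == 1) => /=; last first.
  have sgS' := sg_val (negbT sgS).
  have e : \sum_(Y : {set J} | Y \subset S) F Y = - \sum_(Y : {set J} | Y \subset S) F Y.
    rewrite {1}compl_sum -sumrN; apply: eq_bigr => Y sY.
    rewrite /F setDDK //.
    have := sg_split w sY; rewrite sgS' => /esym /(pm1_ninv (pm1_sg w Y)) ->.
    ring.
  transitivity (\sum_(Y : {set J} | Y \subset S) F Y); first by [].
  by move: e; set Q := \sum_(Y : {set J} | Y \subset S) F Y; lia.
have : (0 < #|S|)%N by rewrite cS expn_gt0.
case/card_gt0P => j0 j0S.
have symF (Y : {set J}) : Y \subset S -> F (S :\: Y) = F Y.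
  move=> sY; rewrite /F setDDK //.
  have := sg_split w sY; rewrite (eqP sgS) => /esym /(pm1_inv (pm1_sg w Y)) ->.
  by rewrite mulrAC.
have -> : \sum_(S1 : {set J} | S1 \subset S) sg w (S :\: S1) * Qp u S1 * Qp u (S :\: S1)
   = \sum_(Y : {set J} | Y \subset S) F Y by [].
rewrite (pair_compl j0S symF).
set E := ((2 ^ p).-1 + (2 ^ p).-1)%N.
have hterm (Y : {set J}) : exists t : int, Y \subset S ->
    F Y = if (#|Y| == 2 ^ p)%N && Zp u Y then 2 ^+ E * (2 * t + 1) else 0.
  case sY : (Y \subset S); last by exists 0.
  case cY : (#|Y| == 2 ^ p)%N; last by exists 0 => _; rewrite /F (Q0 u (negbT cY)) mulr0 mul0r.
  move/eqP: (cY) => cY1; have cY' := cSY Y sY cY1.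
  have := IHu Y cY1; case: ifP => zY; last first.
    by move=> e1; exists 0 => _; rewrite /F e1 mulr0 mul0r.
  case=> t1 e1.
  have zY' : Zp u (S :\: Y) by rewrite Zp_compl.
  have := IHu (S :\: Y) cY'; rewrite zY' => [[t2 e2]].
  rewrite /F e1 e2 /E exprD.
  case/orP: (pm1_sg w (S :\: Y)) => /eqP ->.
    by exists (2 * t1 * t2 + t1 + t2) => _ /=; ring.
  by exists (- (2 * t1 * t2 + t1 + t2) - 1) => _ /=; ring.
have [t ht] := fin_all_exists hterm.
have [r hr] := count_odd (etrans cS (expnS 2 p)) Zu j0S.
rewrite (eq_bigr (fun Y : {set J} => if (#|Y| == 2 ^ p)%N && Zp u Y then 2 ^+ E * (2 * t Y + 1) else 0));
  last by move=> Y /andP [sY _]; rewrite ht.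
exists (\sum_(Y : {set J} | (Y \subset S) && (j0 \in Y))
          (if (#|Y| == 2 ^ p)%N && Zp u Y then t Y else 0) + r).
have e1 : \sum_(Y : {set J} | (Y \subset S) && (j0 \in Y))
     (if (#|Y| == 2 ^ p)%N && Zp u Y then 2 ^+ E * (2 * t Y + 1) else 0) =
   2 ^+ E * (2 * \sum_(Y : {set J} | (Y \subset S) && (j0 \in Y))
          (if (#|Y| == 2 ^ p)%N && Zp u Y then t Y else 0) +
     \sum_(Y : {set J} | (Y \subset S) && (j0 \in Y))
          (if (#|Y| == 2 ^ p)%N && Zp u Y then 1 else 0)).
  rewrite mulr_sumr -big_split mulr_sumr; apply: eq_bigr => Y _.
  by case: ifP => _; rewrite ?mulr0 ?addr0 //; ring.
rewrite e1 hr.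
have eE : ((2 ^ p.+1).-1 = E.+1)%N.
  by rewrite /E expnS; have := expn_gt0 2 p; lia.
rewrite eE exprS mulr2n; ring.
Qed.


Lemma Zfull p : (2 <= p)%N -> Zp (fun j : 'I_(2 ^ p) => j) [set: 'I_(2 ^ p)].
Proof.
case: p => [//|q] hq; rewrite Zrec; apply/andP; split.
  apply/forallP => c; rewrite /chi (eq_bigl xpredT); last by move=> j; rewrite in_setT.
  rewrite big_split_hi /=.
  under eq_bigr => i _ do rewrite lo_top.
  under [X in _ * X]eq_bigr => i _ do rewrite lo_bot.
  rewrite pm1_sqr //; apply: pm1_prod => i _; exact: pm1H.
rewrite /sg (eq_bigl xpredT); last by move=> j; rewrite in_setT.
rewrite big_split_hi /=.
under eq_bigr => i _ do rewrite hi_top.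
under [X in _ * X]eq_bigr => i _ do rewrite hi_bot.
rewrite big1 // mul1r prodr_const card_ord /sgn -signr_odd oddX.
by case: q hq.
Qed.

Lemma perm_Qp p : permanent (H p) = Qp (fun j : 'I_(2 ^ p) => j) [set: 'I_(2 ^ p)].
Proof.
rewrite /Qp /permanent.
rewrite (reindex_onto (fun s : 'S_(2 ^ p) => pval s) (fun f => insubd (1%g : 'S_(2 ^ p)) f)); last first.
  by move=> f /andP [fi _]; rewrite insubdK.
symmetry; apply: eq_big => [s | s _].
  rewrite valKd eqxx andbT (valP s) /=.
  rewrite eqEcard subsetT cardsT /img card_imset ?card_ord ?leqnn //.
  by move=> i j; rewrite pvalE => /perm_inj.
by apply: eq_bigr => i _; rewrite pvalE.
Qed.

Lemma sylvester_map p : sylvester algC p = map_mx intr (sylvester int p).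
Proof.
elim: p => [|p IH] /=; first by rewrite map_mx1.
by rewrite map_castmx map_block_mx map_mxN IH.
Qed.

Lemma perm_scale (R : comPzRingType) m (c : R) (A : 'M[R]_m) :
  permanent (c *: A) = c ^+ m * permanent A.
Proof.
rewrite /permanent mulr_sumr; apply: eq_bigr => s _.
rewrite (eq_bigr (fun i => c * A i (s i))); last by move=> i _; rewrite mxE.
by rewrite big_split /= prodr_const card_ord.
Qed.

Lemma perm_map m (A : 'M[int]_m) : permanent (map_mx intr A : 'M[algC]_m) = (permanent A)%:~R.
Proof.
rewrite /permanent rmorph_sum; apply: eq_bigr => s _.
rewrite rmorph_prod; apply: eq_bigr => i _; by rewrite mxE.
Qed.

Theorem mainTheorem10 (p : nat) (hp : (2 <= p)%N) :
  permanent (sylvester int p) != 0 /\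
  ~~ suppressed (sylvester_interferometer p) (ord_tuple (2 ^ p)) (ord_tuple (2 ^ p)).
Proof.
have P1 : permanent (sylvester int p) != 0.
  rewrite perm_Qp.
  have := mainA (fun j : 'I_(2 ^ p) => j) (_ : #|[set: 'I_(2 ^ p)]| = 2 ^ p)%N.
  rewrite cardsT card_ord => /(_ erefl); rewrite Zfull //; case=> t ->.
  rewrite mulf_neq0 ?expf_neq0 //; apply/eqP; lia.
split => //.
rewrite /suppressed /bosonic_amplitude.
have sc : scattering (sylvester_interferometer p) (ord_tuple (2 ^ p)) (ord_tuple (2 ^ p))
          = sylvester_interferometer p.
  by apply/matrixP => i j; rewrite !mxE !tnth_ord_tuple.
have oc k : occupation (ord_tuple (2 ^ p)) k = 1%N.
  rewrite /occupation val_ord_tuple count_uniq_mem ?enum_uniq //.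
  by rewrite mem_enum.
rewrite sc (eq_bigr (fun _ => 1)); last by move=> k _; rewrite oc.
rewrite big1 // mulr1 sqrtC1 divr1.
rewrite /sylvester_interferometer perm_scale sylvester_map perm_map.
rewrite mulf_neq0 //.
  rewrite expf_neq0 // invr_eq0 sqrtC_eq0 pnatr_eq0 expn_eq0 //.
by rewrite intr_eq0.
Qed.
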